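(* Let $A, B, C, F \in \mathbb{R}^{n\times n}$ with $A$ invertible, and suppose $\sigma_{\max}(CA^{-1}B) < 1$. Then the matrix equation $$AX + B\lvert CX\rvert = F$$ has exactly one solution $X \in \mathbb{R}^{n\times n}$.
   Context: $\sigma_{\max}(\cdot)$ is the largest singular value and $\lvert M\rvert$ the entrywise absolute value of a matrix $M$. *)

(* Defs.v *)
From HB Require Import structures.
From mathcomp Require Import all_boot all_order all_algebra.
From mathcomp Require Import boolp classical_sets reals.
Set Implicit Arguments. Unset Strict Implicit. Unset Printing Implicit Defensive.
Import Order.TTheory GRing.Theory Num.Theory.
Local Open Scope ring_scope.
Local Open Scope classical_set_scope.

Definition vnorm2 (R : realType) (n : nat) (x : 'cV[R]_n) : R :=
  Num.sqrt (\sum_(i < n) x i 0 ^+ 2).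

(* largest singular value = operator 2-norm = sup_{||x||_2 = 1} ||M x||_2
   (sup over the empty set is 0, matching sigma_max of a 0x0 matrix) *)
Definition sigma_max (R : realType) (m n : nat) (M : 'M[R]_(m, n)) : R :=
  sup [set vnorm2 (M *m x) | x in [set x : 'cV[R]_n | vnorm2 x = 1]].

Definition mabs (R : realType) (m n : nat) (M : 'M[R]_(m, n)) : 'M[R]_(m, n) :=
  \matrix_(i, j) `|M i j|.

(* Main.v *)
Require Import Defs.
From HB Require Import structures.
From mathcomp Require Import all_boot all_order all_algebra.
From mathcomp Require Import boolp classical_sets reals.
From mathcomp Require Import all_classical all_reals all_analysis.
From mathcomp Require Import lra.
Import Order.TTheory GRing.Theory Num.Theory.
Local Open Scope ring_scope.
Local Open Scope classical_set_scope.
Set Implicit Arguments. Unset Strict Implicit. Unset Printing Implicit Defensive.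

Section Aux.
Variable R : realType.

Definition sqv n (x : 'cV[R]_n) : R := \sum_(i < n) x i 0 ^+ 2.
Arguments sqv {n}.

Lemma sqv_ge0 n (x : 'cV[R]_n) : 0 <= sqv x.
Proof. by apply: sumr_ge0 => i _; exact: sqr_ge0. Qed.

Lemma vnorm2E n (x : 'cV[R]_n) : vnorm2 x = Num.sqrt (sqv x).
Proof. by []. Qed.

Lemma coord_le n (x : 'cV[R]_n) i : x i 0 ^+ 2 <= sqv x.
Proof.
rewrite /sqv (bigD1 i) //= lerDl; apply: sumr_ge0 => j _; exact: sqr_ge0.
Qed.

Lemma sumsq_le n (b : 'I_n -> R) : (forall i, 0 <= b i) ->
  \sum_(i < n) b i ^+ 2 <= (\sum_(i < n) b i) ^+ 2.
Proof.
elim: n b => [|n IH] b hb; first by rewrite !big_ord0 expr0n.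
rewrite !big_ord_recr /=.
have h1 := IH (fun i => b (widen_ord (leqnSn n) i)) (fun i => hb _).
have h2 : 0 <= \sum_(i < n) b (widen_ord (leqnSn n) i) by apply: sumr_ge0.
have h3 := hb ord_max.
move: h1 h2 h3; set S := \sum_(i < n) _ ^+ 2; set T := \sum_(i < n) _.
move=> h1 h2 h3; rewrite sqrrD; have := mulr_ge0 h2 h3; lra.
Qed.

Lemma sqvZ n c (x : 'cV[R]_n) : sqv (c *: x) = c ^+ 2 * sqv x.
Proof. rewrite /sqv mulr_sumr; apply: eq_bigr => i _; by rewrite mxE exprMn. Qed.

Lemma sqv_eq0 n (x : 'cV[R]_n) : sqv x = 0 -> x = 0.
Proof.
move=> h; apply/matrixP => i j; rewrite (ord1 j) mxE.
have := coord_le x i; rewrite h => /(le_trans (sqr_ge0 _)) => _.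
have : x i 0 ^+ 2 <= 0 by rewrite -h coord_le.
by move=> hh; apply/eqP; rewrite -sqrf_eq0 eq_le hh sqr_ge0.
Qed.

End Aux.
Section Sig.
Variable R : realType.
Variables (n : nat) (M : 'M[R]_n).

Lemma unit_sqv (y : 'cV[R]_n) : vnorm2 y = 1 -> sqv y = 1.
Proof. by move=> h; rewrite -(sqr_sqrtr (sqv_ge0 y)) -vnorm2E h expr1n. Qed.

Lemma vnorm2_le_sum (y : 'cV[R]_n) : vnorm2 y <= \sum_i `|y i 0|.
Proof.
rewrite vnorm2E -(ger0_norm (sumr_ge0 _ (fun i _ => normr_ge0 (y i 0)))).
rewrite -sqrtr_sqr ler_sqrt; last exact: sqr_ge0.
rewrite /sqv; under eq_bigr => i _ do rewrite -real_normK ?num_real //.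
exact: sumsq_le.
Qed.

Definition Kb := \sum_i \sum_j `|M i j|.

Lemma bound1 (y : 'cV[R]_n) : vnorm2 y = 1 -> vnorm2 (M *m y) <= Kb.
Proof.
move=> hy; have sy := unit_sqv hy.
apply: (le_trans (vnorm2_le_sum _)); apply: ler_sum => i _.
rewrite mxE; apply: (le_trans (ler_norm_sum _ _ _)); apply: ler_sum => j _.
rewrite normrM -[leRHS]mulr1; apply: ler_wpM2l => //.
have := coord_le y j; rewrite sy => h.
rewrite ler_norml; apply/andP; split; nra.
Qed.

Definition qq := Num.max (sigma_max M) 0.

Lemma sig_bound1 (y : 'cV[R]_n) : vnorm2 y = 1 -> vnorm2 (M *m y) <= qq.
Proof.
move=> hy; apply: (@le_trans _ _ (sigma_max M)); first last.
  by rewrite le_max lexx.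
apply: sup_upper_bound; last by exists y.
split; first by exists (vnorm2 (M *m y)); exists y.
by exists Kb => _ [z hz <-]; exact: bound1.
Qed.

Lemma qq_ge0 : 0 <= qq.
Proof. by rewrite le_max lexx orbT. Qed.

Lemma sqv_bound (x : 'cV[R]_n) : sqv (M *m x) <= qq ^+ 2 * sqv x.
Proof.
have [h0|hne] := eqVneq (sqv x) 0.
  by move/sqv_eq0: h0 => ->; rewrite mulmx0 /sqv big1 ?mulr0 // => i _; rewrite mxE expr0n.
have sp : 0 < sqv x by rewrite lt_def hne sqv_ge0.
set s := Num.sqrt (sqv x).
have s0 : 0 < s by rewrite sqrtr_gt0.
have ss : s ^+ 2 = sqv x by rewrite sqr_sqrtr // sqv_ge0.
have hu : vnorm2 (s^-1 *: x) = 1.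
  rewrite vnorm2E sqvZ -ss -exprMn mulVf ?gt_eqF // expr1n; exact: sqrtr1.
have := sig_bound1 hu; rewrite -scalemxAr vnorm2E sqvZ => h.
have h2 : s^-1 ^+ 2 * sqv (M *m x) <= qq ^+ 2.
  rewrite -(sqr_sqrtr (mulr_ge0 (sqr_ge0 _) (sqv_ge0 _))).
  rewrite ler_pXn2r // ?nnegrE ?sqrtr_ge0 ?qq_ge0 //.
rewrite -ss; move: h2; rewrite exprVn ler_pdivrMl ?exprn_gt0 //.
by rewrite mulrC.
Qed.
End Sig.
Section Fro.
Variable R : realType.
Variables (n : nat).

Definition fro (Z : 'M[R]_n) := \sum_j sqv (col j Z).

Lemma fro_ge0 Z : 0 <= fro Z.
Proof. by apply: sumr_ge0 => j _; exact: sqv_ge0. Qed.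

Lemma col_mulmx (A W : 'M[R]_n) j : col j (A *m W) = A *m col j W.
Proof. by rewrite !colE mulmxA. Qed.

Lemma froM (M W : 'M[R]_n) : fro (M *m W) <= qq M ^+ 2 * fro W.
Proof.
rewrite /fro mulr_sumr; apply: ler_sum => j _; rewrite col_mulmx.
exact: sqv_bound.
Qed.

Lemma fro_abs (a b : 'M[R]_n) : fro (mabs a - mabs b) <= fro (a - b).
Proof.
apply: ler_sum => j _; apply: ler_sum => i _; rewrite !mxE.
rewrite -(real_normK (num_real (_ - _))) -[leRHS](real_normK (num_real _)).
rewrite ler_pXn2r ?nnegrE //; exact: ler_dist_dist.
Qed.

Lemma froN (a : 'M[R]_n) : fro (- a) = fro a.
Proof. by apply: eq_bigr => j _; apply: eq_bigr => i _; rewrite !mxE sqrrN. Qed.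

Lemma entry_le (Z : 'M[R]_n) i j : `|Z i j| <= `|Z|.
Proof.
rewrite (_ : `|Z| = mx_norm Z) // mx_normrE.
exact: (le_bigmax 0 (fun ij : 'I_n * 'I_n => `|Z ij.1 ij.2|) (i, j)).
Qed.

Lemma norm_le_fro (Z : 'M[R]_n) : `|Z| ^+ 2 <= fro Z.
Proof.
have [h0|hne] := eqVneq (mx_norm Z) 0.
  by rewrite (_ : `|Z| = mx_norm Z) // h0 expr0n fro_ge0.
have [[i j] /= hij] := mx_norm_neq0 hne.
rewrite (_ : `|Z| = mx_norm Z) // hij.
rewrite real_normK ?num_real //.
apply: (le_trans (_ : _ <= sqv (col j Z))).
  by have := coord_le (col j Z) i; rewrite mxE.
rewrite /fro (bigD1 j) //= lerDl; apply: sumr_ge0 => k _; exact: sqv_ge0.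
Qed.

Lemma fro_le_norm (Z : 'M[R]_n) : fro Z <= (n%:R * `|Z|) ^+ 2.
Proof.
rewrite exprMn -natrX expnS expn1 natrM -mulrA mulr_natl.
apply: (@le_trans _ _ (\sum_(j < n) (n%:R * `|Z| ^+ 2))); last first.
  by rewrite sumr_const card_ord.
apply: ler_sum => j _.
apply: (@le_trans _ _ (\sum_(i < n) `|Z| ^+ 2)); last first.
  by rewrite sumr_const card_ord mulr_natl.
apply: ler_sum => i _; rewrite mxE -(real_normK (num_real (Z i j))).
by rewrite ler_pXn2r ?nnegrE // entry_le.
Qed.

End Fro.

Section MMdef.
Variable (R : realType) (n : nat).
Definition MM := 'M[R]_n.
HB.instance Definition _ := NormedModule.on MM.
HB.instance Definition _ := isPointed.Build MM 0.
HB.instance Definition _ := Uniform_isComplete.Build MM (@mx_complete R n n).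
End MMdef.

Section Main.
Variable R : realType.
Variables (n : nat) (M G : 'M[R]_n).
Hypothesis sig1 : sigma_max M < 1.

Definition Tm (Z : 'M[R]_n) := G - M *m mabs Z.

Lemma Tm_diff a b : fro (Tm a - Tm b) <= qq M ^+ 2 * fro (a - b).
Proof.
have -> : Tm a - Tm b = M *m (mabs b - mabs a).
  by rewrite /Tm mulmxBr; apply/matrixP => i j; rewrite !mxE; lra.
apply: (le_trans (froM _ _)); apply: ler_wpM2l; first exact: sqr_ge0.
by rewrite -froN opprB fro_abs.
Qed.

Lemma iter_diff k a b :
  fro (iter k Tm a - iter k Tm b) <= (qq M ^+ 2) ^+ k * fro (a - b).
Proof.
elim: k => [|k IH]; first by rewrite expr0 mul1r.
rewrite !iterS; apply: (le_trans (Tm_diff _ _)).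
by rewrite [(_ ^+ 2) ^+ k.+1]exprS -mulrA; apply: ler_wpM2l => //; exact: sqr_ge0.
Qed.

Lemma iter_lip k a b :
  `|iter k Tm a - iter k Tm b| <= qq M ^+ k * n%:R * `|a - b|.
Proof.
have q0 := qq_ge0 M.
rewrite -(@ler_pXn2r _ 2) ?nnegrE ?mulr_ge0 ?exprn_ge0 //.
apply: (le_trans (norm_le_fro _)); apply: (le_trans (iter_diff _ _ _)).
rewrite -mulrA [in leRHS]exprMn (_ : (qq M ^+ 2) ^+ k = (qq M ^+ k) ^+ 2); last first.
  by rewrite -!exprM mulnC.
apply: ler_wpM2l; first exact: sqr_ge0.
exact: fro_le_norm.
Qed.

Lemma qq_lt1 : qq M < 1.
Proof. by rewrite /qq gt_max sig1 ltr01. Qed.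

Lemma exists_k : exists k, qq M ^+ k * n%:R < 1.
Proof.
have q0 := qq_ge0 M.
have n0 : (0 : R) <= n%:R := ler0n R n.
have qa : `|qq M| < 1 by rewrite ger0_norm // qq_lt1.
have := cvg_expr qa.
have ep : 0 < (n%:R + 1 : R)^-1 by rewrite invr_gt0; lra.
move/cvgrPdist_lt => /(_ _ ep) [N _ HN]; exists N.
have := HN N (leqnn N); rewrite /= sub0r normrN ger0_norm ?exprn_ge0 //.
have qN := exprn_ge0 N q0.
move=> h.
have h2 : qq M ^+ N * (n%:R + 1) < 1 by rewrite -ltr_pdivlMr ?mul1r //; lra.
rewrite mulrDr mulr1 in h2; lra.
Qed.

Lemma Tm_fix : exists! Z, Tm Z = Z.
Proof.
have [k hk] := exists_k.
have hc : 0 <= qq M ^+ k * n%:R by rewrite mulr_ge0 ?exprn_ge0 ?qq_ge0.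
pose f : MM R n -> MM R n := iter k Tm.
have ctr : is_contraction (totalfun f).
  exists (NngNum hc); split => //.
  by move=> [x y] _ /=; exact: iter_lip.
have [p _ hp] := banach_fixed_point ctr closedT (ex_intro _ 0 I).
have fix1 : Tm p = p.
  apply: (contraction_fixpoint_unique ctr I I) => //=.
  change (Tm p = iter k Tm (Tm p)); rewrite -iterSr iterS.
  by rewrite {1}hp.
exists (p : 'M[R]_n); split => // Z hZ.
apply: (@contraction_fixpoint_unique _ _ _ (totalfun f) (p : MM R n) (Z : MM R n) ctr I I) => //=.
change (Z = iter k Tm Z); by rewrite iter_fix.
Qed.
End Main.

Unset Implicit Arguments.
Local Close Scope classical_set_scope.

Theorem proposition4p1 (R : realType) (n : nat) (A B C F : 'M[R]_n) :
  A \in unitmx ->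
  sigma_max (C *m invmx A *m B) < 1 ->
  exists! X : 'M[R]_n, A *m X + B *m mabs (C *m X) = F.
Proof.
move=> hA hs.
have [Z [hZ uZ]] := Tm_fix (C *m invmx A *m F) hs.
exists (invmx A *m (F - B *m mabs Z)); split.
  have hCX : C *m (invmx A *m (F - B *m mabs Z)) = Z.
    by rewrite mulmxA mulmxBr !mulmxA -[RHS]hZ.
  by rewrite hCX mulmxA mulmxV // mul1mx subrK.
move=> Y hY.
have hAY : A *m Y = F - B *m mabs (C *m Y) by rewrite -hY addrK.
have hY2 : Y = invmx A *m (F - B *m mabs (C *m Y)) by rewrite -hAY mulKmx.
have hT : Tm (C *m invmx A *m B) (C *m invmx A *m F) (C *m Y) = C *m Y.
  by rewrite [in RHS]hY2 /Tm mulmxA mulmxBr !mulmxA.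
by rewrite (uZ _ hT) -hY2.
Qed.
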